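(* Let $G$ be a finite simple undirected graph. Then there exists an integer $n\ge 2$ such that $G$ is isomorphic to an induced subgraph of $G(n)$.
   Context: For an integer $n\ge 2$, let $V(n)$ be the set of all divisors of $n$ that are greater than $1$. The graph $G(n)$ is the simple undirected graph with vertex set $V(n)$ in which two distinct vertices $a,b$ are adjacent if and only if $\gcd(a,b)>1$. *)

(* Defs.v *)
From mathcomp Require Import all_boot.
Set Implicit Arguments. Unset Strict Implicit. Unset Printing Implicit Defensive.

Definition divGraph_vertex (n a : nat) : bool := (1 < a) && (a %| n).

Definition divGraph_adj (a b : nat) : bool := (a != b) && (1 < gcdn a b).

Definition simple_graph (T : finType) (e : rel T) : Prop :=
  symmetric e /\ irreflexive e.

Definition induced_subgraph_of_divGraph (T : finType) (e : rel T) (n : nat) : Prop :=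
  exists f : T -> nat,
    [/\ injective f,
        forall x, divGraph_vertex n (f x)
      & forall x y, e x y = divGraph_adj (f x) (f y)].

(* Main.v *)
Require Import Defs.
From mathcomp Require Import all_boot.
From mathcomp Require Import zify.

Fixpoint pr (k : nat) : nat :=
  match k with
  | 0 => s2val (prime_above 0)
  | k'.+1 => s2val (prime_above (pr k'))
  end.

Lemma pr_prime k : prime (pr k).
Proof. by case: k => [|k] /=; case: prime_above. Qed.

Lemma pr_lt k : pr k < pr k.+1.
Proof. by rewrite /=; case: prime_above. Qed.

Lemma pr_mono : {homo pr : a b / a < b}.
Proof. apply: homo_ltn; [exact: ltn_trans | exact: pr_lt]. Qed.


Lemma pr_inj : injective pr.
Proof.
move=> a b H; case: (ltngtP a b) => // /pr_mono; rewrite H ltnn //.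
Qed.

Lemma coprime_prodr p (I : finType) (P : pred I) (F : I -> nat) :
  (forall i, P i -> coprime p (F i)) -> coprime p (\prod_(i | P i) F i).
Proof.
move=> H; apply: (big_ind (fun x => coprime p x)) => //.
- exact: coprimen1.
- by move=> x y Hx Hy; rewrite coprimeMr Hx Hy.
Qed.

Lemma coprime_prodl p (I : finType) (P : pred I) (F : I -> nat) :
  (forall i, P i -> coprime (F i) p) -> coprime (\prod_(i | P i) F i) p.
Proof.
move=> H; rewrite coprime_sym; apply: coprime_prodr => i Hi; rewrite coprime_sym; exact: H.
Qed.

Lemma coprime_pr a b : a != b -> coprime (pr a) (pr b).
Proof.
move=> H; rewrite prime_coprime ?pr_prime // dvdn_prime2 ?pr_prime //.
apply/negP => /eqP /pr_inj /eqP; exact/negP.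
Qed.

Section S.
Variables (T : finType) (e : rel T).
Hypothesis He : simple_graph e.

Let N := #|T|.
Definition g (v : T) : nat := enum_rank v.
Definition ei (a b : nat) : nat := N + N * minn a b + maxn a b.
Definition f (v : T) : nat := pr (g v) * \prod_(u | e v u) pr (ei (g u) (g v)).

Lemma g_lt v : g v < N.
Proof. rewrite /g /N; case: (enum_rank v) => /= i; by rewrite cardE. Qed.

Lemma g_inj : injective g.
Proof. by move=> x y /val_inj /enum_rank_inj. Qed.

Lemma ei_ge a b : N <= ei a b.
Proof. rewrite /ei; lia. Qed.

Lemma ei_inj a b c d : a < N -> b < N -> c < N -> d < N -> ei a b = ei c d ->
  (a = c /\ b = d) \/ (a = d /\ b = c).
Proof.
move=> Ha Hb Hc Hd; rewrite /ei => E0.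
have E : N * minn a b + maxn a b = N * minn c d + maxn c d by lia.
have Hm : maxn a b < N by rewrite gtn_max Ha Hb.
have Hm' : maxn c d < N by rewrite gtn_max Hc Hd.
have E1 : minn a b = minn c d.
  have := congr1 (divn^~ N) E.
  by rewrite !(mulnC N) !divnMDl ?divn_small ?addn0 //; lia.
have E2 : maxn a b = maxn c d by move: E; rewrite E1; lia.
lia.
Qed.

Lemma f_gt1 v : 1 < f v.
Proof.
rewrite /f; have := prime_gt1 (pr_prime (g v)).
have : 0 < \prod_(u | e v u) pr (ei (g u) (g v)).
  by rewrite prodn_gt0 // => i; apply: prime_gt0; apply: pr_prime.
nia.
Qed.

Lemma cop_key k y : k != g y -> (forall u, e y u -> k != ei (g u) (g y)) ->
  coprime (pr k) (f y).
Proof.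
move=> H1 H2; rewrite /f coprimeMr coprime_pr // /=.
apply: coprime_prodr => u Hu; apply: coprime_pr; exact: H2.
Qed.

Lemma f_inj : injective f.
Proof.
move=> x y Hf; apply: g_inj; apply/eqP/negPn/negP => Hne.
have C : coprime (pr (g x)) (f y).
  apply: cop_key => // u _; apply/eqP => E.
  have := ei_ge (g u) (g y); have := g_lt x; lia.
have D : pr (g x) %| f y by rewrite -Hf /f dvdn_mulr.
move: C; rewrite prime_coprime ?pr_prime // D //.
Qed.

Lemma sym_ei a b : ei a b = ei b a.
Proof. by rewrite /ei minnC maxnC. Qed.

Lemma nonadj x y : x != y -> ~~ e x y -> coprime (f x) (f y).
Proof.
case: He => Hs Hirr.
move=> Hxy Hn; rewrite /f coprimeMl; apply/andP; split.
  apply: cop_key.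
  - by apply/eqP => /g_inj /eqP; apply/negP.
  - move=> u _; apply/eqP => E; have := ei_ge (g u) (g y); have := g_lt x; lia.
apply: coprime_prodl => w Hw; apply: cop_key.
- apply/eqP => E; have := ei_ge (g w) (g x); have := g_lt y; lia.
- move=> u Hu; apply/eqP => E.
  case: (@ei_inj _ _ _ _ (g_lt w) (g_lt x) (g_lt u) (g_lt y) E) => [[E1 E2]|[E1 E2]].
  + by move: Hxy; rewrite (@g_inj _ _ E2) eqxx.
  + by move: Hn; rewrite -(@g_inj _ _ E1) Hw.
Qed.

Lemma adj_equiv x y : e x y = divGraph_adj (f x) (f y).
Proof.
case: He => Hs Hirr.
rewrite /divGraph_adj; case: (eqVneq x y) => [->|Hxy].
  by rewrite Hirr eqxx.
have Hf : f x != f y by apply: contra Hxy => /eqP /f_inj ->.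
rewrite Hf /=; case Hexy: (e x y).
- have D1 : pr (ei (g y) (g x)) %| f x.
    by rewrite /f dvdn_mull // (bigD1 y) //= dvdn_mulr.
  have D2 : pr (ei (g y) (g x)) %| f y.
    rewrite /f dvdn_mull // (bigD1 x) /=; last by rewrite Hs.
    by rewrite sym_ei dvdn_mulr.
  have G : pr (ei (g y) (g x)) %| gcdn (f x) (f y) by rewrite dvdn_gcd D1 D2.
  have P1 := prime_gt1 (pr_prime (ei (g y) (g x))).
  have := dvdn_leq _ G; rewrite gcdn_gt0 (ltnW (f_gt1 x)) => /(_ isT); lia.
- have := @nonadj _ _ Hxy (negbT Hexy); rewrite /coprime => /eqP ->; done.
Qed.

End S.

Theorem theorem1 (T : finType) (e : rel T) :
  simple_graph e -> exists n : nat, 1 < n /\ induced_subgraph_of_divGraph e n.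
Proof.
move=> He; exists (2 * \prod_(v : T) @f T e v); split.
  have : 0 < \prod_(v : T) @f T e v.
    by rewrite prodn_gt0 // => i; apply: ltnW; exact: f_gt1.
  lia.
exists (@f T e); split.
- exact: (@f_inj T e).
- move=> x; rewrite /divGraph_vertex f_gt1 //=.
  by rewrite dvdn_mull // (bigD1 x) //= dvdn_mulr.
- move=> x y; exact: (@adj_equiv T e He).
Qed.
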